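(* Let $K=2q$ with $q\ge 4$ and suppose $t=KM/N=3$. Then the D2D coded caching rate $R=N/M-1$ is achievable with subpacketization $$F=\frac{3K^2(K-2)}{8},$$ so that $F/F_{\rm JCM}=\frac{3}{4}\cdot\frac{K}{K-1}$.
   Context: D2D coded caching setting: there are $N\ge 1$ files $W_1,\dots,W_N$ and $K\ge 2$ users, each with a cache of size $M$ files, $0<M\le N$, and $t:=KM/N$ is assumed to be a positive integer. A D2D coded caching scheme with (uncoded placement and) subpacketization $F\in\mathbb{N}_+$ is defined as follows. Fix a packet size $b\ge 1$; each file is a sequence of $F$ packets $W_n=(W_n^{(1)},\dots,W_n^{(F)})$, $W_n^{(j)}\in\{0,1\}^b$. Placement: each user $k\in[K]$ stores the packets $\{W_n^{(j)}:(n,j)\in Z_k\}$ for a fixed index set $Z_k\subseteq[N]\times[F]$ with $|Z_k|\le MF$ (independent of demands and file contents). Delivery: for every demand vector $\mathbf d=(d_1,\dots,d_K)\in[N]^K$, each user $k$ broadcasts to all other users $\ell_k(\mathbf d)\in\mathbb{N}$ blocks in $\{0,1\}^b$, each a deterministic function of the packets stored by user $k$; it is required that for all file contents each user $k$ can recover all $F$ packets of $W_{d_k}$ from its stored packets and the blocks sent by the other users. The rate is $R=\max_{\mathbf d}\frac{1}{F}\sum_{k=1}^K\ell_k(\mathbf d)$ (transmitted bits normalized by the file size $Fb$). The rate $R$ is achievable with subpacketization $F$ if such a scheme with rate $R$ exists for every packet size $b\ge 1$. Define $F_{\rm JCM}:=t\binom{K}{t}$. *)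

(* Defs.v *)
From mathcomp Require Import all_boot all_order all_algebra.
Set Implicit Arguments. Unset Strict Implicit. Unset Printing Implicit Defensive.
Import Order.TTheory GRing.Theory Num.Theory.

Definition block (b : nat) := (b.-tuple bool)%type.
(* The whole file library: packet j of file n is W (n, j). *)
Definition library (N F b : nat) := {ffun 'I_N * 'I_F -> block b}.
Definition demand (N K : nat) := {ffun 'I_K -> 'I_N}.

(* What a user with index set Z sees: the packets in Z, everything else
   replaced by a fixed dummy value (all zeros). *)
Definition maskZ (N F b : nat) (Z : {set 'I_N * 'I_F}) (W : library N F b)
  : library N F b :=
  [ffun p => if p \in Z then W p else nseq_tuple b false].

(* A D2D coded caching scheme (uncoded placement) with N files, K users,
   cache size M, subpacketization F, packet size b and rate R.
   - Z k    : index set of packets cached by user k, |Z k| <= M F;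
   - ell k d: number of b-bit blocks broadcast by user k for demand d;
   - enc k d: user k's transmissions, a function of its cached packets only;
   - dec k d: user k's decoder, a function of its cached packets and of the
              transmissions of the other users only;
   - rate = max_d (1/F) sum_k ell k d = R. *)
Definition D2D_scheme (N K : nat) (M : rat) (F b : nat) (R : rat) : Prop :=
  exists (Z : 'I_K -> {set 'I_N * 'I_F})
         (ell : 'I_K -> demand N K -> nat)
         (enc : 'I_K -> demand N K -> library N F b -> seq (block b))
         (dec : 'I_K -> demand N K -> library N F b ->
                  ('I_K -> seq (block b)) -> 'I_F -> block b),
    [/\ (forall k, (#|Z k|%:R <= M * F%:R)%R),
        (forall k d W, size (enc k d W) = ell k d),
        (forall k d (W : library N F b) (f : 'I_F),
            dec k d (maskZ (Z k) W)
                (fun j => if j == k then [::] else enc j d (maskZ (Z j) W)) f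
            = W (d k, f)) &
        ((\max_(d : demand N K) \sum_(k < K) ell k d)%:R = R * F%:R)%R].

Definition achievable (N K : nat) (M : rat) (F : nat) (R : rat) : Prop :=
  forall b : nat, 1 <= b -> D2D_scheme N K M F b R.

Definition F_JCM (K t : nat) : nat := t * 'C(K, t).

(* Main.v *)
Require Import Defs.
From mathcomp Require Import all_boot all_order all_algebra zify ring lra.
Import Order.TTheory GRing.Theory Num.Theory.
Set Implicit Arguments. Unset Strict Implicit. Unset Printing Implicit Defensive.


Definition xblk (b : nat) (I : finType) (P : pred I) (w : I -> block b) : block b :=
  [tuple \big[addb/false]_(x | P x) tnth (w x) c | c < b].

Lemma generic_scheme (N K F b : nat) (M R : rat) (U P Tr : finType)
 (phi : 'I_K -> U) (phiinv : U -> 'I_K) (phiK : cancel phi phiinv) (phiK' : cancel phiinv phi)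
 (psi : 'I_F -> P) (psiinv : P -> 'I_F) (psiK : cancel psi psiinv) (psiK' : cancel psiinv psi)
 (cache : U -> P -> bool) (snd : Tr -> U) (deliv : Tr -> U -> P -> bool)
 (n : nat)
 (H1 : forall t k p, deliv t k p -> cache (snd t) p)
 (H2 : forall t k p k' p', deliv t k p -> deliv t k' p' -> (k,p) != (k',p') -> cache k p')
 (H3 : forall k p, ~~ cache k p -> exists t, deliv t k p)
 (Hc : forall k, ((N * #|[set p | cache k p]|)%:R <= M * F%:R)%R)
 (Ht : #|Tr| <= n) (Hn : (n%:R = R * F%:R)%R) (k0 : 'I_K) (d0 : demand N K) :
 D2D_scheme N K M F b R.
Proof.
pose zero := nseq_tuple b false.
pose Z k := [set x : 'I_N * 'I_F | cache (phi k) (psi x.2)].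
pose trs (u : 'I_K) := [seq t <- enum Tr | snd t == phi u].
pose xb (d : demand N K) (W : library N F b) t :=
  xblk (fun x : U * P => deliv t x.1 x.2) (fun x => W (d (phiinv x.1), psiinv x.2)).
pose enc u d W := map (xb d W) (trs u) ++ (if u == k0 then nseq (n - #|Tr|) zero else [::]).
pose ell (u : 'I_K) (d : demand N K) := size (trs u) + (if u == k0 then n - #|Tr| else 0).
pose dec (k : 'I_K) (d : demand N K) (Wm : library N F b) (tr : 'I_K -> seq (block b)) (f : 'I_F) :=
  if cache (phi k) (psi f) then Wm (d k, f) else
  match [pick t | deliv t (phi k) (psi f)] with
  | Some t => [tuple tnth (nth zero (tr (phiinv (snd t))) (index t (trs (phiinv (snd t))))) c (+)
      \big[addb/false]_(x : U * P | deliv t x.1 x.2 && (x != (phi k, psi f)))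
        tnth (Wm (d (phiinv x.1), psiinv x.2)) c | c < b]
  | None => zero end.
exists Z, ell, enc, dec; split.
- move=> k.
  have -> : #|Z k| = N * #|[set p | cache (phi k) p]|.
    have -> : Z k = setX [set: 'I_N] [set f | cache (phi k) (psi f)].
      by apply/setP => -[x f]; rewrite !inE.
    rewrite cardsX cardsT card_ord; congr (_ * _).
    have -> : [set p | cache (phi k) p] = psi @: [set f | cache (phi k) (psi f)].
      apply/setP => p; apply/idP/imsetP.
        by rewrite inE => hp; exists (psiinv p); rewrite ?inE psiK'.
      by case=> f; rewrite !inE => hf ->.
    by rewrite card_imset //; apply: (can_inj psiK).
  exact: Hc.
- by move=> k d W; rewrite /enc /ell size_cat size_map; case: (k == k0); rewrite ?size_nseq.
- move=> k d W f; rewrite /dec.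
  have hmask : forall j x, cache (phi j) (psi x.2) -> maskZ (Z j) W x = W x.
    by move=> j x hx; rewrite /maskZ ffunE inE hx.
  case: ifP => hc; first by rewrite hmask.
  case: pickP => [t ht|]; last first.
    move=> hn; have [t ht] := H3 _ _ (negbT hc); by rewrite hn in ht.
  set u := phiinv (snd t).
  have hu : u != k.
    apply/eqP => huk; have hc' : cache (phi k) (psi f).
      by rewrite -huk /u phiK'; exact: H1 ht.
    by rewrite hc' in hc.
  rewrite (negbTE hu).
  have hin : t \in trs u by rewrite mem_filter /u phiK' eqxx mem_enum.
  rewrite nth_cat size_map index_mem hin (nth_map t) ?index_mem // nth_index //.
  apply: eq_from_tnth => c; rewrite tnth_mktuple /xb /xblk tnth_mktuple.
  have hmu : forall x : U * P, deliv t x.1 x.2 ->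
      maskZ (Z u) W (d (phiinv x.1), psiinv x.2) = W (d (phiinv x.1), psiinv x.2).
    by move=> x hx; rewrite hmask //= /u phiK' psiK'; exact: H1 hx.
  have hmk : forall x : U * P, deliv t x.1 x.2 && (x != (phi k, psi f)) ->
      maskZ (Z k) W (d (phiinv x.1), psiinv x.2) = W (d (phiinv x.1), psiinv x.2).
    move=> [x p] /andP [hx hne]; rewrite hmask //= psiK'.
    by apply: (H2 _ _ _ _ _ ht hx); rewrite eq_sym.
  rewrite (bigD1 (phi k, psi f)) //= phiK psiK hmask /=; last first.
    by rewrite /u phiK'; exact: H1 ht.
  rewrite -addbA.
  set S1 := \big[addb/false]_(i | _) _.
  set S2 := \big[addb/false]_(i | _) _.
  suff -> : S1 = S2 by rewrite addbb addbF.
  rewrite /S1 /S2; apply: eq_bigr => x hx.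
  by rewrite hmk // hmu //; case/andP: hx.
- have hsum : forall d, \sum_(k < K) ell k d = n.
    move=> d; rewrite /ell big_split /=.
    rewrite -big_mkcond /= big_pred1_eq.
    suff -> : \sum_(k < K) size (trs k) = #|Tr| by rewrite subnKC.
    transitivity (\sum_(k < K) \sum_(t : Tr) (snd t == phi k)).
      apply: eq_bigr => k _; rewrite /trs size_filter -sum1_count big_enum_cond /=.
      by rewrite big_mkcond /=; apply: eq_bigr => t _; case: ifP.
    rewrite exchange_big /= -sum1_card; apply: eq_bigr => t _.
    rewrite (bigD1 (phiinv (snd t))) //= phiK' eqxx big1 // => i hi.
    apply/eqP; rewrite eqb0; apply: contra hi => /eqP ->; by rewrite phiK.
  suff -> : \max_(d : demand N K) \sum_(k < K) ell k d = n by [].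
  apply/eqP; rewrite eqn_leq; apply/andP; split.
    by apply/bigmax_leqP => d _; rewrite hsum.
  by rewrite -{1}(hsum d0); apply: leq_bigmax.
Qed.


Notation PairT q := {A : {set 'I_q} | #|A| == 2}.
Notation TripT q := {B : {set 'I_q} | #|B| == 3}.
Notation UT q := (bool * 'I_q)%type.
Notation PT q := (bool * PairT q * 'I_q * 'I_3)%type.
Notation TrT q :=
  ((bool * TripT q * 'I_q * 'I_3) + (bool * 'I_q * 'I_q.-1 * PairT q))%type.
Definition r0 : 'I_3 := @Ordinal 3 0 isT.
Definition r1 : 'I_3 := @Ordinal 3 1 isT.
Definition r2 : 'I_3 := @Ordinal 3 2 isT.

Definition cacheD q (k : UT q) (p : PT q) : bool :=
  if k.1 == p.1.1.1 then k.2 \in val p.1.1.2 else k.2 == p.1.2.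

Definition sndD q (t : TrT q) : UT q :=
  match t with
  | inl (e, B, x, r) => (~~ e, x)
  | inr (e, a, y', A') => (e, a)
  end.

Definition delivD q (t : TrT q) (k : UT q) (p : PT q) : bool :=
  match t with
  | inl (e, B, x, r) =>
      [&& k.1 == e, k.2 \in val B, p.1.1.1 == e, val p.1.1.2 == val B :\ k.2,
          p.1.2 == x & p.2 == r]
  | inr (e, a, y', A') =>
      let y := lift a y' in
      [&& k.1 == e, k.2 == y, p.1.1.1 == ~~ e, val p.1.1.2 == val A', p.1.2 == a & p.2 == r2]
      || [&& k.1 == ~~ e, k.2 \in val A', p.1.1.1 == e, val p.1.1.2 == [set a; y],
             p.1.2 \in val A', p.1.2 != k.2 & p.2 == (if a < y then r0 else r1)]
  end.

Lemma pair3 (T : finType) (A : {set T}) x y z :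
  #|A| == 2 -> x \in A -> y \in A -> z \in A -> x != y -> z != y -> z = x.
Proof.
move/cards2P => [u [v [huv ->]]]; rewrite !in_set2.
by move=> /orP[]/eqP-> /orP[]/eqP-> /orP[]/eqP->; rewrite ?eqxx // eq_sym ?huv.
Qed.

Lemma peq q (p p' : PT q) : p.1.1.1 = p'.1.1.1 -> sval p.1.1.2 = sval p'.1.1.2 ->
  p.1.2 = p'.1.2 -> p.2 = p'.2 -> p = p'.
Proof.
by case: p => [[[s A] z] r]; case: p' => [[[s' A'] z'] r'] /= -> /val_inj -> -> ->.
Qed.

Lemma H1D q t k p : @delivD q t k p -> cacheD (sndD t) p.
Proof.
case: t => [[[[e B] x] r]|[[[e a] y'] A']] /=.
  case/and5P => _ _ /eqP hs _ /andP[/eqP hz _].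
  by rewrite /cacheD /= hs hz eqxx; case: e {hs}.
case/orP.
  case/and5P => _ _ /eqP hs _ /andP[/eqP hz _].
  by rewrite /cacheD /= hs hz eqxx; case: e {hs}.
case/and5P => _ _ /eqP hs /eqP hA _.
by rewrite /cacheD /= hs eqxx hA set21.
Qed.

Lemma H2D q t k p k' p' : @delivD q t k p -> delivD t k' p' -> (k,p) != (k',p') -> cacheD k p'.
Proof.
case: k => e1 a1; case: k' => e2 a2.
case: t => [[[[e B] x] r]|[[[e a] y'] A']] /=.
- case/and5P=> /eqP-> hB /eqP hs /eqP hA /andP[/eqP hz /eqP hr].
  case/and5P=> /eqP-> hB' /eqP hs' /eqP hA' /andP[/eqP hz' /eqP hr'] hne.
  rewrite /cacheD /= hs' eqxx hA' in_setD1 hB andbT.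
  apply: contra hne => /eqP ha; rewrite ha; apply/eqP; congr (_, _).
  by apply: peq; [rewrite hs hs' | rewrite hA hA' ha | rewrite hz hz' | rewrite hr hr'].
- have hA'2 := valP A'.
  case/orP => [/and5P[/eqP-> /eqP-> /eqP hs /eqP hA /andP[/eqP hz /eqP hr]]
              |/and5P[/eqP-> ha1 /eqP hs /eqP hA /andP[hz /andP[hza /eqP hr]]]];
  case/orP => [/and5P[/eqP-> /eqP-> /eqP hs' /eqP hA' /andP[/eqP hz' /eqP hr']]
              |/and5P[/eqP-> ha2 /eqP hs' /eqP hA' /andP[hz' /andP[hza' /eqP hr']]]] hne.
  + exfalso; move/negP: hne; apply; apply/eqP; congr (_, _).
    by apply: peq; rewrite ?hs ?hs' ?hA ?hA' ?hz ?hz' ?hr ?hr'.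
  + by rewrite /cacheD /= hs' eqxx hA' set22.
  + by rewrite /cacheD /= hs' eqxx hA'.
  + case: (eqVneq a1 a2) => [ha|ha].
      exfalso; subst a2; move/negP: hne; apply; apply/eqP; congr (_, _).
      have hzz : p'.1.2 = p.1.2 := pair3 hA'2 hz ha1 hz' hza hza'.
      by apply: peq; [rewrite hs hs' | rewrite hA hA' | rewrite hzz | rewrite hr hr'].
    have hz2 : p'.1.2 = a1 := pair3 hA'2 ha1 ha2 hz' ha hza'.
    rewrite /cacheD /= hs' hz2 eqxx.
    by case: e {hs hs' hne}.
Qed.

Lemma lift_ex n (a y : 'I_n) : y != a -> exists y' : 'I_n.-1, lift a y' = y.
Proof. by case: (unliftP a y) => [y' ->|->]; [exists y'|rewrite eqxx]. Qed.

Lemma H3D q k p : ~~ @cacheD q k p -> exists t, delivD t k p.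
Proof.
case: k => e x; case: p => [[[s A] z] r]; rewrite /cacheD /=.
case: (eqVneq e s) => [<-|hes] /=.
  move=> hx.
  have hB : #|x |: sval A| == 3 by rewrite cardsU1 hx (eqP (valP A)).
  exists (inl (e, exist _ (x |: sval A) hB, z, r)) => /=.
  by rewrite !eqxx /= setU11 setU1K ?eqxx.
move=> hxz.
have hs : s = ~~ e by case: e s hes => -[].
have hA2 := valP A.
case: (eqVneq r r2) => [hr|hr].
  have [y' hy] := lift_ex hxz.
  exists (inr (e, z, y', A)) => /=.
  by rewrite hy hs hr !eqxx.
have [u [v [huv hA]]] : exists u v : 'I_q, u < v /\ sval A = [set u; v].
  move/cards2P: hA2 => [u [v [huv ->]]].
  case: (ltngtP u v) => h; first by exists u, v.
    by exists v, u; rewrite setUC.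
  by move: huv; rewrite (val_inj h) eqxx.
have hxz2 : #|[set x; z]| == 2 by rewrite cards2 hxz.
have hr01 : r = r0 \/ r = r1.
  move: hr; case: r => [[|[|[|m]]] hm] //= _; [left|right]; exact/val_inj.
case: hr01 => hr'.
  have hvu : v != u by rewrite eq_sym neq_ltn huv.
  have [y' hy] := lift_ex hvu.
  exists (inr (s, u, y', exist _ [set x; z] hxz2)) => /=.
  have hb : bump u y' = v by rewrite -hy.
  rewrite hy hb hA huv hr' hs !eqxx set21 set22 /=; case: e {hs hes}=> //=.
  all: try by rewrite andbT eq_sym.
have huv' : u != v by rewrite neq_ltn huv.
have [y' hy] := lift_ex huv'.
exists (inr (s, v, y', exist _ [set x; z] hxz2)) => /=.
have hb : bump v y' = u by rewrite -hy.
rewrite hy hb hA setUC ltnNge (ltnW huv) hr' hs !eqxx set21 set22 /=; case: e {hs hes}=> //=.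
all: try by rewrite andbT eq_sym.
Qed.


Lemma cardPair q : #|{: PairT q}| = 'C(q, 2).
Proof.
rewrite card_sub.
have := card_draws 'I_q 2; rewrite card_ord => <-.
by apply: eq_card => A; rewrite !inE.
Qed.

Lemma cardTrip q : #|{: TripT q}| = 'C(q, 3).
Proof.
rewrite card_sub.
have := card_draws 'I_q 3; rewrite card_ord => <-.
by apply: eq_card => A; rewrite !inE.
Qed.

Lemma cardPT q : #|{: PT q}| = 2 * 'C(q, 2) * q * 3.
Proof. by rewrite !card_prod card_bool cardPair !card_ord. Qed.

Lemma cardTrT q : #|{: TrT q}| = 2 * 'C(q, 3) * q * 3 + 2 * q * q.-1 * 'C(q, 2).
Proof. by rewrite card_sum !card_prod card_bool cardPair cardTrip !card_ord. Qed.

Lemma cardUT q : #|{: UT q}| = 2 * q.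
Proof. by rewrite card_prod card_bool card_ord. Qed.

Lemma cardPairx q (x : 'I_q) : #|[set A : PairT q | x \in sval A]| = q.-1.
Proof.
have -> : #|[set A : PairT q | x \in sval A]| =
          #|[set A : {set 'I_q} | (#|A| == 2) && (x \in A)]|.
  have hinj : injective (fun A : PairT q => sval A) by move=> A B /val_inj.
  rewrite -(card_imset _ hinj); apply: eq_card => A.
  rewrite [RHS]inE; apply/imsetP/idP.
    by case=> B; rewrite inE => hB ->; rewrite (valP B).
  case/andP => hA hx; exists (exist _ A hA) => //; by rewrite inE.
have -> : [set A : {set 'I_q} | (#|A| == 2) && (x \in A)] = [set [set x; y] | y in [set~ x]].
  apply/setP => A; rewrite [LHS]inE; apply/idP/imsetP.
    case/andP => /cards2P [u [v [huv ->]]]; rewrite in_set2 => /orP[]/eqP hx.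
      by exists v; rewrite ?inE hx // eq_sym.
    by exists u; rewrite ?inE hx // setUC.
  case=> y; rewrite !inE => hy ->; by rewrite cards2 [x == y]eq_sym hy set21.
rewrite card_in_imset ?cardsC1 ?card_ord //.
move=> y1 y2; rewrite !inE => h1 h2 heq.
have : y1 \in [set x; y2] by rewrite -heq set22.
by rewrite in_set2 (negbTE h1) => /eqP.
Qed.

Lemma cardCache q (k : UT q) : #|[set p : PT q | cacheD k p]| = 3 * q * q.-1 + 3 * 'C(q, 2).
Proof.
case: k => e x.
have -> : [set p : PT q | cacheD (e, x) p] =
   setX (setX (setX [set e] [set A : PairT q | x \in sval A]) [set: 'I_q]) [set: 'I_3]
   :|: setX (setX (setX [set ~~ e] [set: PairT q]) [set x]) [set: 'I_3].
  apply/setP => -[[[s A] z] r]; rewrite !inE /cacheD /=.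
  by case: e; case: s => //=; rewrite ?andbT ?orbF ?orFb ?andbF // eq_sym.
rewrite cardsU.
have -> : setX (setX (setX [set e] [set A : PairT q | x \in sval A]) [set: 'I_q]) [set: 'I_3]
   :&: setX (setX (setX [set ~~ e] [set: PairT q]) [set x]) [set: 'I_3] = set0.
  apply/setP => -[[[s A] z] r]; rewrite !inE.
  by case: e; case: s => //=; rewrite !andbF.
rewrite cards0 subn0 !cardsX !cards1 !cardsT cardPairx cardPair !card_ord.
by nia.
Qed.


Lemma card_bij (T : finType) n (h : #|T| = n) :
  exists (f : 'I_n -> T) (g : T -> 'I_n), cancel f g /\ cancel g f.
Proof.
exists (fun i => enum_val (cast_ord (esym h) i)), (fun x => cast_ord h (enum_rank x)).
split => [i|x]; first by rewrite enum_valK cast_ordKV.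
by rewrite cast_ordK enum_rankK.
Qed.

Lemma bin2E q : 'C(q, 2) * 2 = q * q.-1.
Proof. by rewrite -[2]/(2`!) bin_ffact ffactnS ffactn1. Qed.

Lemma bin3E q : 'C(q, 3) * 6 = q * (q.-1 * q.-2).
Proof. by rewrite -[6]/(3`!) bin_ffact !ffactnS ffactn0 muln1. Qed.

Local Open Scope ring_scope.

Theorem mainTheorem9 (q N : nat) (M : rat) :
  (4 <= q)%N -> (1 <= N)%N -> 0 < M -> M <= N%:R ->
  (2 * q)%:R * M / N%:R = 3%:R ->
  let K := (2 * q)%N in
  let F := (3 * K ^ 2 * (K - 2) %/ 8)%N in
  achievable N K M F (N%:R / M - 1) /\
  F%:R / (F_JCM K 3)%:R = (3%:R / 4%:R) * (K%:R / (K%:R - 1)) :> rat.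
Proof.
move=> hq hN hM hMN hcond K F.
have h2 := bin2E q; have h3 := bin3E q.
set c2 := 'C(q, 2) in h2; set c3 := 'C(q, 3) in h3.
have hF : F = (2 * c2 * q * 3)%N.
  rewrite /F /K; have -> : (3 * (2 * q) ^ 2 * (2 * q - 2) = (2 * c2 * q * 3) * 8)%N.
    have -> : (2 * q - 2 = 2 * q.-1)%N by lia.
    have -> : (2 * c2 * q * 3 * 8 = 24 * q * (c2 * 2))%N by ring.
    rewrite h2; ring.
  by rewrite mulnK.
have hNr : (N%:R : rat) != 0 by rewrite pnatr_eq0 -lt0n.
have hqr : ((2 * q)%:R : rat) != 0 by rewrite pnatr_eq0; lia.
have hMv : M = 3 * N%:R / (2 * q)%:R.
  rewrite -hcond; field; rewrite hNr andbT pnatr_eq0; lia.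
have hq1 : (q.-1%:R : rat) = q%:R - 1 by rewrite -subn1 natrB //; lia.
have hq2 : (q.-2%:R : rat) = q%:R - 2 by rewrite -subn2 natrB //; lia.
have hc2 : (c2%:R : rat) = q%:R * (q%:R - 1) / 2.
  have := congr1 (fun n => n%:R : rat) h2; rewrite /= !natrM hq1 => <-.
  by field.
have hc3 : (c3%:R : rat) = q%:R * ((q%:R - 1) * (q%:R - 2)) / 6.
  have := congr1 (fun n => n%:R : rat) h3; rewrite /= !natrM hq1 hq2 => <-.
  by field.
have hFr : (F%:R : rat) = 3 * q%:R * (q%:R * (q%:R - 1)).
  by rewrite hF !natrM hc2; field.
have q4 : (4%:R : rat) <= q%:R by rewrite ler_nat.
split.
  move=> b hb.
  have [phi [phiinv [phiK phiK']]] := card_bij (cardUT q).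
  have hPF : #|{: PT q}| = F by rewrite cardPT hF.
  have [psi [psiinv [psiK psiK']]] := card_bij hPF.
  have hK0 : (0 < K)%N by rewrite /K; lia.
  apply: (@generic_scheme N K F b M (N%:R / M - 1) (UT q) (PT q) (TrT q) phi phiinv phiK phiK' psi psiinv psiK psiK' (@cacheD q) (@sndD q) (@delivD q) #|{: TrT q}| (@H1D q) (@H2D q) (@H3D q)
            _ (leqnn #|{: TrT q}|) _ (Ordinal hK0) [ffun _ => Ordinal hN]).
    move=> k; rewrite cardCache hMv hFr natrM natrD !natrM hq1 hc2.
    rewrite le_eqVlt; apply/orP; left; apply/eqP; field.
    by apply/negP => /eqP h; lra.
  rewrite cardTrT natrD !natrM hc3 hc2 hq1 hMv hFr; field.
  by rewrite hNr andbT; apply/negP => /eqP h; lra.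
rewrite /F_JCM /K.
have h3K := bin3E (2 * q).
have hc3K : ('C(2 * q, 3)%:R : rat) = (2 * q%:R) * ((2 * q%:R - 1) * (2 * q%:R - 2)) / 6.
  have := congr1 (fun n => n%:R : rat) h3K.
  have -> : (2 * q).-2 = (2 * q - 2)%N by lia.
  have -> : (2 * q).-1 = (2 * q - 1)%N by lia.
  have l1 : (1 <= 2 * q)%N by lia.
  have l2 : (2 <= 2 * q)%N by lia.
  rewrite /= !natrM !natrB // !natrM => <-; by field.
rewrite hFr natrM hc3K.
rewrite natrM; field.
by apply/and3P; split; apply/negP => /eqP h; lra.
Qed.
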